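(* For any set $X$, the free inverse monoid $\operatorname{FIM}(X)$, regarded as an $F$-inverse monoid, is given by the presentation $\operatorname{FInv}\langle X\mid \operatorname{red}(w)=w^{\mathfrak m},\ w\in(X\cup X^{-1})^*\rangle$.
   Context: $\operatorname{FIM}(X)$ is $F$-inverse, with $(w_{\operatorname{FIM}(X)})^{\mathfrak m}=\operatorname{red}(w)_{\operatorname{FIM}(X)}$, where $\operatorname{red}(w)$ is the freely reduced form of the word $w$ and $s^{\mathfrak m}$ denotes the greatest element of the $\sigma$-class of $s$ (the $F$-inverse monoid signature being $(\cdot,1,{}^{-1},{}^{\mathfrak m})$). $\operatorname{FInv}\langle X\mid R\rangle$ denotes the quotient of the free $F$-inverse monoid on $X$ by the congruence generated by the relation $R$ on terms $u_0v_1^{\mathfrak m}u_1\cdots v_n^{\mathfrak m}u_n$ ($u_i,v_i\in(X\cup X^{-1})^*$). The claim is that this presented $F$-inverse monoid is isomorphic to $\operatorname{FIM}(X)$ via the map sending each generator $x$ to $x$. *)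

(* Defs.v *)
From Stdlib Require Import List Relations.
Import ListNotations.
Set Implicit Arguments.

Record InvMonoid := {
  im_car :> Type;
  im_mul : im_car -> im_car -> im_car;
  im_one : im_car;
  im_inv : im_car -> im_car;
  im_assoc : forall a b c, im_mul a (im_mul b c) = im_mul (im_mul a b) c;
  im_mul1 : forall a, im_mul im_one a = a;
  im_mulr1 : forall a, im_mul a im_one = a;
  im_inv_r : forall a, im_mul (im_mul a (im_inv a)) a = a;
  im_inv_l : forall a, im_mul (im_mul (im_inv a) a) (im_inv a) = im_inv a;
  im_idem_comm : forall e f, im_mul e e = e -> im_mul f f = f ->
                 im_mul e f = im_mul f e
}.

Arguments im_mul {_}. Arguments im_one {_}. Arguments im_inv {_}.

Definition idempotent {M : InvMonoid} (e : M) : Prop := im_mul e e = e.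

Definition nat_le {M : InvMonoid} (a b : M) : Prop :=
  exists e : M, idempotent e /\ a = im_mul e b.

Definition sigma_rel {M : InvMonoid} (a b : M) : Prop :=
  exists e : M, idempotent e /\ im_mul e a = im_mul e b.

Definition sigma_max {M : InvMonoid} (a m : M) : Prop :=
  sigma_rel m a /\ forall b : M, sigma_rel b a -> nat_le b m.

Record FInvMonoid := {
  fim_base :> InvMonoid;
  fim_m : fim_base -> fim_base;
  fim_m_max : forall a : fim_base, sigma_max a (fim_m a)
}.

Arguments fim_m {_}.

Definition inv_monoid_morphism {M N : InvMonoid} (g : M -> N) : Prop :=
  (forall a b, g (im_mul a b) = im_mul (g a) (g b)) /\
  g im_one = im_one /\
  (forall a, g (im_inv a) = im_inv (g a)).

Definition finv_morphism {M N : FInvMonoid} (g : M -> N) : Prop :=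
  inv_monoid_morphism g /\ (forall a, g (fim_m a) = fim_m (g a)).

(** * Words over X u X^{-1}: [inl x] is x, [inr x] is x^{-1} *)
Definition letter (X : Type) := (X + X)%type.
Definition word (X : Type) := list (letter X).

Definition letter_inv (X : Type) (a : letter X) : letter X :=
  match a with inl x => inr x | inr x => inl x end.

Inductive free_step (X : Type) : word X -> word X -> Prop :=
| free_step_intro : forall (w1 w2 : word X) (a : letter X),
    free_step (w1 ++ a :: letter_inv a :: w2) (w1 ++ w2).

Definition freely_reduced (X : Type) (w : word X) : Prop :=
  forall w', ~ free_step w w'.

Definition is_red (X : Type) (w r : word X) : Prop :=
  clos_refl_trans (word X) (@free_step X) w r /\ freely_reduced r.

Definition eval_letter {X : Type} {M : InvMonoid} (f : X -> M) (a : letter X) : M :=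
  match a with inl x => f x | inr x => im_inv (f x) end.

Definition eval_word {X : Type} {M : InvMonoid} (f : X -> M) (w : word X) : M :=
  fold_right (fun a acc => im_mul (eval_letter f a) acc) im_one w.

(** * Terms u0 v1^m u1 ... vn^m un, represented as (u0, [(v1,u1);...;(vn,un)]) *)
Definition fterm (X : Type) := (word X * list (word X * word X))%type.

Definition eval_fterm {X : Type} {M : FInvMonoid} (f : X -> M) (t : fterm X) : M :=
  im_mul (eval_word f (fst t))
    (fold_right (fun vu acc =>
        im_mul (im_mul (fim_m (eval_word f (fst vu))) (eval_word f (snd vu))) acc)
      im_one (snd t)).

Definition satisfies {X : Type} (R : fterm X -> fterm X -> Prop)
  {M : FInvMonoid} (f : X -> M) : Prop :=
  forall t s, R t s -> eval_fterm f t = eval_fterm f s.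

(** [iP : X -> P] presents FInv<X | R>: P is the quotient of the free
    F-inverse monoid on X by the congruence generated by R, characterised
    (up to isomorphism over X) by its universal property. *)
Definition is_FInv_presentation {X : Type} (R : fterm X -> fterm X -> Prop)
  {P : FInvMonoid} (iP : X -> P) : Prop :=
  satisfies R iP /\
  (forall (N : FInvMonoid) (f : X -> N), satisfies R f ->
     exists g : P -> N, finv_morphism g /\ forall x, g (iP x) = f x) /\
  (forall (N : FInvMonoid) (g1 g2 : P -> N), finv_morphism g1 -> finv_morphism g2 ->
     (forall x, g1 (iP x) = g2 (iP x)) -> forall a, g1 a = g2 a).

Definition is_free_inverse_monoid {X : Type} {F : InvMonoid} (iF : X -> F) : Prop :=
  (forall (N : InvMonoid) (f : X -> N),
     exists g : F -> N, inv_monoid_morphism g /\ forall x, g (iF x) = f x) /\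
  (forall (N : InvMonoid) (g1 g2 : F -> N), inv_monoid_morphism g1 ->
     inv_monoid_morphism g2 -> (forall x, g1 (iF x) = g2 (iF x)) ->
     forall a, g1 a = g2 a).

Definition word_fterm (X : Type) (w : word X) : fterm X := (w, []).
Definition m_fterm (X : Type) (w : word X) : fterm X := ([], [(w, [])]).

Definition fim_relations (X : Type) : fterm X -> fterm X -> Prop :=
  fun t s => exists w r : word X, is_red w r /\ t = word_fterm r /\ s = m_fterm w.

(* Main.v *)
Require Import Defs.
From Stdlib Require Import List Relations ClassicalEpsilon ProofIrrelevance.
Import ListNotations.

Local Infix "⋅" := im_mul (at level 40, left associativity).

Ltac assoc_eq := repeat rewrite im_assoc; reflexivity.

Section InvM.
Variable M : InvMonoid.

Lemma idem_aai (a : M) : idempotent (a ⋅ im_inv a).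
Proof. unfold idempotent. rewrite im_assoc, im_inv_r. reflexivity. Qed.
Lemma idem_iaa (a : M) : idempotent (im_inv a ⋅ a).
Proof. unfold idempotent. rewrite im_assoc, im_inv_l. reflexivity. Qed.

Lemma inv_unique (a x : M) : a ⋅ x ⋅ a = a -> x ⋅ a ⋅ x = x -> x = im_inv a.
Proof.
  intros H1 H2.
  pose proof (im_inv_r _ a) as Hy1; pose proof (im_inv_l _ a) as Hy2.
  set (y := im_inv a) in *.
  assert (Ixa : idempotent (x ⋅ a)) by (unfold idempotent; rewrite im_assoc, H2; reflexivity).
  assert (Iya : idempotent (y ⋅ a)) by (unfold idempotent; rewrite im_assoc, Hy2; reflexivity).
  assert (Iax : idempotent (a ⋅ x)) by (unfold idempotent; rewrite im_assoc, H1; reflexivity).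
  assert (Iay : idempotent (a ⋅ y)) by (unfold idempotent; rewrite im_assoc, Hy1; reflexivity).
  assert (C1 : x = y ⋅ a ⋅ x).
  { transitivity (x ⋅ (a ⋅ y ⋅ a) ⋅ x). { rewrite Hy1; symmetry; exact H2. }
    transitivity ((x ⋅ a) ⋅ (y ⋅ a) ⋅ x). { assoc_eq. }
    rewrite (im_idem_comm _ Ixa Iya).
    transitivity (y ⋅ a ⋅ (x ⋅ a ⋅ x)). { assoc_eq. } rewrite H2; reflexivity. }
  assert (C2 : y = y ⋅ a ⋅ x).
  { transitivity (y ⋅ (a ⋅ x ⋅ a) ⋅ y). { rewrite H1; symmetry; exact Hy2. }
    transitivity (y ⋅ ((a ⋅ x) ⋅ (a ⋅ y))). { assoc_eq. }
    rewrite (im_idem_comm _ Iax Iay).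
    transitivity ((y ⋅ a ⋅ y) ⋅ a ⋅ x). { assoc_eq. } rewrite Hy2; reflexivity. }
  rewrite C2. exact C1.
Qed.

Lemma inv_inv (a : M) : im_inv (im_inv a) = a.
Proof. symmetry. apply inv_unique; [apply im_inv_l | apply im_inv_r]. Qed.

Lemma inv_one : im_inv (@im_one M) = im_one.
Proof. pose proof (im_inv_r _ (@im_one M)) as H. rewrite im_mul1, im_mulr1 in H. exact H. Qed.

Lemma inv_mul (a b : M) : im_inv (a ⋅ b) = im_inv b ⋅ im_inv a.
Proof.
  symmetry. apply inv_unique.
  - transitivity (a ⋅ ((b ⋅ im_inv b) ⋅ (im_inv a ⋅ a)) ⋅ b). { assoc_eq. }
    rewrite (im_idem_comm _ (idem_aai b) (idem_iaa a)).
    transitivity ((a ⋅ im_inv a ⋅ a) ⋅ (b ⋅ im_inv b ⋅ b)). { assoc_eq. }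
    rewrite !im_inv_r. reflexivity.
  - transitivity (im_inv b ⋅ ((im_inv a ⋅ a) ⋅ (b ⋅ im_inv b)) ⋅ im_inv a). { assoc_eq. }
    rewrite (im_idem_comm _ (idem_iaa a) (idem_aai b)).
    transitivity ((im_inv b ⋅ b ⋅ im_inv b) ⋅ (im_inv a ⋅ a ⋅ im_inv a)). { assoc_eq. }
    rewrite !im_inv_l. reflexivity.
Qed.

Lemma idem_one : idempotent (@im_one M).
Proof. unfold idempotent. apply im_mul1. Qed.

Lemma le_refl (x : M) : nat_le x x.
Proof. exists im_one. split; [apply idem_one | symmetry; apply im_mul1]. Qed.

Lemma le_trans (x y z : M) : nat_le x y -> nat_le y z -> nat_le x z.
Proof.
  intros [e [He ->]] [f [Hf ->]]. exists (e ⋅ f). split.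
  - unfold idempotent in *.
    transitivity (e ⋅ (f ⋅ e) ⋅ f). { assoc_eq. }
    rewrite <- (im_idem_comm _ He Hf).
    transitivity ((e ⋅ e) ⋅ (f ⋅ f)). { assoc_eq. } rewrite He, Hf; reflexivity.
  - apply im_assoc.
Qed.

Lemma le_idem (e x : M) : idempotent e -> nat_le (e ⋅ x) x.
Proof. intros He. exists e. auto. Qed.

Lemma le_mull (z x y : M) : nat_le x y -> nat_le (z ⋅ x) (z ⋅ y).
Proof.
  intros [e [He ->]].
  assert (K : z ⋅ e ⋅ im_inv z ⋅ z = z ⋅ e).
  { transitivity (z ⋅ (e ⋅ (im_inv z ⋅ z))). { assoc_eq. }
    rewrite (im_idem_comm _ He (idem_iaa z)).
    transitivity ((z ⋅ im_inv z ⋅ z) ⋅ e). { assoc_eq. } rewrite im_inv_r; reflexivity. }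
  exists (z ⋅ e ⋅ im_inv z). split.
  - unfold idempotent in *.
    transitivity ((z ⋅ e ⋅ im_inv z ⋅ z) ⋅ e ⋅ im_inv z). { assoc_eq. }
    rewrite K. transitivity (z ⋅ (e ⋅ e) ⋅ im_inv z). { assoc_eq. } rewrite He; reflexivity.
  - transitivity ((z ⋅ e ⋅ im_inv z ⋅ z) ⋅ y). { rewrite K. assoc_eq. } assoc_eq.
Qed.

Lemma le_sigma (x y : M) : nat_le x y -> sigma_rel y x.
Proof.
  intros [e [He ->]]. exists e. split; auto. rewrite im_assoc, He. reflexivity.
Qed.

End InvM.
Section Words.
Variable X : Type.

Definition push (a : letter X) (s : word X) : word X :=
  match s with
  | [] => [a]
  | b :: s' => if excluded_middle_informative (b = letter_inv a) then s' else a :: b :: s'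
  end.

Fixpoint act (w s : word X) : word X :=
  match w with [] => s | a :: w' => push a (act w' s) end.

Fixpoint red_ok (w : word X) : Prop :=
  match w with
  | [] => True
  | a :: s => match s with [] => True | b :: _ => b <> letter_inv a /\ red_ok s end
  end.

Lemma letter_inv_inv (a : letter X) : letter_inv (letter_inv a) = a.
Proof. destruct a; reflexivity. Qed.

Lemma red_ok_tail a s : red_ok (a :: s) -> red_ok s.
Proof. destruct s; simpl; tauto. Qed.

Lemma push_ok a s : red_ok s -> red_ok (push a s).
Proof.
  destruct s as [|b s]; simpl; intros H; auto.
  destruct (excluded_middle_informative _) as [E|E].
  - exact (red_ok_tail _ _ H).
  - simpl. auto.
Qed.

Lemma act_ok w s : red_ok s -> red_ok (act w s).
Proof. induction w; simpl; auto using push_ok. Qed.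

Lemma push_cancel a s : red_ok s -> push (letter_inv a) (push a s) = s.
Proof.
  destruct s as [|b s]; intros H.
  - simpl. destruct (excluded_middle_informative _) as [E|E]; auto.
    exfalso; apply E; symmetry; apply letter_inv_inv.
  - simpl. destruct (excluded_middle_informative (b = letter_inv a)) as [E|E].
    + subst b. destruct s as [|c s]; simpl; auto.
      destruct (excluded_middle_informative _) as [E|E]; auto.
      exfalso. simpl in H. destruct H as [H _]. auto.
    + simpl. destruct (excluded_middle_informative _) as [E'|E']; auto.
      exfalso; apply E'; symmetry; apply letter_inv_inv.
Qed.

Lemma push_cancel' a s : red_ok s -> push a (push (letter_inv a) s) = s.
Proof. intros H. pose proof (push_cancel (letter_inv a) s H) as E. rewrite letter_inv_inv in E. exact E. Qed.

Lemma push_act a u s : red_ok u -> red_ok s -> push a (act u s) = act (push a u) s.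
Proof.
  destruct u as [|b u]; intros Hu Hs; simpl; auto.
  destruct (excluded_middle_informative (b = letter_inv a)) as [E|E].
  - subst b. apply push_cancel'. apply act_ok; auto.
  - reflexivity.
Qed.

Lemma act_red w s : red_ok s -> act w s = act (act w []) s.
Proof.
  induction w as [|a w IH]; simpl; intros Hs; auto.
  rewrite IH by auto. apply push_act; auto. apply act_ok. exact I.
Qed.

Lemma act_app w1 w2 s : act (w1 ++ w2) s = act w1 (act w2 s).
Proof. induction w1; simpl; congruence. Qed.

Lemma act_nil_ok r : red_ok r -> act r [] = r.
Proof.
  induction r as [|a r IH]; simpl; intros H; auto.
  rewrite IH by exact (red_ok_tail _ _ H).
  destruct r as [|b r]; simpl; auto.
  destruct (excluded_middle_informative _) as [E|E]; auto.
  exfalso. simpl in H. tauto.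
Qed.

Lemma act_assoc r s t : red_ok s -> red_ok t -> act (act r s) t = act r (act s t).
Proof.
  intros Hs Ht. rewrite <- act_app. rewrite (act_red (r ++ s) t Ht).
  rewrite act_app, (act_nil_ok s Hs). reflexivity.
Qed.

Lemma act_cancel r t : red_ok t -> act (rev (map (@letter_inv X) r)) (act r t) = t.
Proof.
  induction r as [|a r IH]; simpl; intros Ht; auto.
  rewrite act_app. simpl. rewrite push_cancel by (apply act_ok; auto). auto.
Qed.

Lemma winv_invol r : rev (map (@letter_inv X) (rev (map (@letter_inv X) r))) = r.
Proof.
  rewrite map_rev, map_map, rev_involutive.
  erewrite map_ext; [apply map_id | apply letter_inv_inv].
Qed.

Lemma act_cancel' r t : red_ok t -> act r (act (rev (map (@letter_inv X) r)) t) = t.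
Proof.
  intros Ht. pose proof (act_cancel (rev (map (@letter_inv X) r)) t Ht) as E.
  rewrite winv_invol in E. exact E.
Qed.

Definition FGc := { r : word X | red_ok r }.

Lemma sig_ext {A : Type} {P : A -> Prop} (a b : sig P) : proj1_sig a = proj1_sig b -> a = b.
Proof. destruct a, b; simpl; intros; subst; f_equal; apply proof_irrelevance. Qed.

Definition fg_mul (a b : FGc) : FGc :=
  exist _ (act (proj1_sig a) (proj1_sig b)) (act_ok _ _ (proj2_sig b)).
Definition fg_one : FGc := exist _ [] I.
Definition fg_inv (a : FGc) : FGc :=
  exist _ (act (rev (map (@letter_inv X) (proj1_sig a))) []) (act_ok _ [] I).

Lemma fg_assoc a b c : fg_mul a (fg_mul b c) = fg_mul (fg_mul a b) c.
Proof. apply sig_ext; simpl. symmetry; apply act_assoc; [apply (proj2_sig b) | apply (proj2_sig c)]. Qed.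
Lemma fg_mul1 a : fg_mul fg_one a = a.
Proof. apply sig_ext; reflexivity. Qed.
Lemma fg_mulr1 a : fg_mul a fg_one = a.
Proof. apply sig_ext; simpl. apply act_nil_ok, (proj2_sig a). Qed.
Lemma fg_mulV a : fg_mul a (fg_inv a) = fg_one.
Proof. apply sig_ext; simpl. apply act_cancel'. exact I. Qed.
Lemma fg_Vmul a : fg_mul (fg_inv a) a = fg_one.
Proof.
  apply sig_ext; simpl. rewrite <- act_red by apply (proj2_sig a).
  transitivity (act (rev (map (@letter_inv X) (proj1_sig a))) (act (proj1_sig a) [])).
  - rewrite act_nil_ok by apply (proj2_sig a). reflexivity.
  - apply act_cancel. exact I.
Qed.
Lemma fg_idem e : fg_mul e e = e -> e = fg_one.
Proof.
  intros H. transitivity (fg_mul e (fg_mul e (fg_inv e))).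
  - rewrite fg_mulV, fg_mulr1. reflexivity.
  - rewrite fg_assoc, H. apply fg_mulV.
Qed.

Definition FG : InvMonoid.
Proof.
  refine (@Build_InvMonoid FGc fg_mul fg_one fg_inv fg_assoc fg_mul1 fg_mulr1 _ _ _).
  - intros a. rewrite fg_mulV, fg_mul1. reflexivity.
  - intros a. rewrite fg_Vmul, fg_mul1. reflexivity.
  - intros e f He Hf. rewrite (fg_idem e He), (fg_idem f Hf). reflexivity.
Defined.

Definition fg_gen (x : X) : FG := exist _ [inl x] I.

Lemma eval_fg w : proj1_sig (eval_word fg_gen w) = act w [].
Proof.
  induction w as [|a w IH]; simpl; auto.
  rewrite IH. destruct a; reflexivity.
Qed.

Lemma step_cons a (u v : word X) : free_step u v -> free_step (a :: u) (a :: v).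
Proof. intros H. destruct H as [w1 w2 b]. exact (free_step_intro (a :: w1) w2 b). Qed.

Lemma rt_cons a (u v : word X) : clos_refl_trans _ (@free_step X) u v ->
  clos_refl_trans _ (@free_step X) (a :: u) (a :: v).
Proof.
  intros H. induction H.
  - apply rt_step, step_cons; auto.
  - apply rt_refl.
  - eapply rt_trans; eauto.
Qed.

Lemma red_path w : clos_refl_trans _ (@free_step X) w (act w []).
Proof.
  induction w as [|a w IH]; simpl. apply rt_refl.
  eapply rt_trans; [apply rt_cons, IH|].
  destruct (act w []) as [|b u]; simpl. apply rt_refl.
  destruct (excluded_middle_informative _) as [E|E].
  - subst. apply rt_step. exact (free_step_intro [] u a).
  - apply rt_refl.
Qed.

Lemma step_act u v : free_step u v -> act u [] = act v [].
Proof.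
  intros H. destruct H as [w1 w2 a]. rewrite !act_app. simpl.
  rewrite push_cancel'; auto. apply act_ok. exact I.
Qed.

Lemma crt_act u v : clos_refl_trans _ (@free_step X) u v -> act u [] = act v [].
Proof. intros H; induction H; auto using step_act; congruence. Qed.

Lemma fr_ok r : freely_reduced r -> red_ok r.
Proof.
  induction r as [|a r IH]; simpl; intros H; auto.
  destruct r as [|b r]; auto. split.
  - intro E; subst b. apply (H r). exact (free_step_intro [] r a).
  - apply IH. intros w' Hs. apply (H (a :: w')). apply step_cons; auto.
Qed.

Lemma ok_fr r : red_ok r -> freely_reduced r.
Proof.
  intros H w' Hs. revert H. destruct Hs as [w1 w2 a]. intros H.
  induction w1 as [|c w1 IH].
  - simpl in H. destruct H as [H _]. apply H; reflexivity.
  - apply IH. exact (red_ok_tail _ _ H).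
Qed.

Lemma is_red_act w : is_red w (act w []).
Proof. split; [apply red_path | apply ok_fr, act_ok; exact I]. Qed.

End Words.
Arguments push {X}. Arguments act {X}. Arguments red_ok {X}.
Section Eval.
Variable X : Type.

Lemma eval_morph (M N : InvMonoid) (g : M -> N) (f : X -> M) w :
  inv_monoid_morphism g -> g (eval_word f w) = eval_word (fun x => g (f x)) w.
Proof.
  intros [Hm [H1 Hi]]. induction w as [|a w IH]; simpl; auto.
  rewrite Hm, IH. destruct a; simpl; rewrite ?Hi; auto.
Qed.

Lemma eval_ext (M : InvMonoid) (f f' : X -> M) w :
  (forall x, f x = f' x) -> eval_word f w = eval_word f' w.
Proof.
  intros H. induction w as [|a w IH]; simpl; auto. rewrite IH. destruct a; simpl; rewrite H; auto.
Qed.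

Lemma eval_app (M : InvMonoid) (f : X -> M) u v :
  eval_word f (u ++ v) = eval_word f u ⋅ eval_word f v.
Proof.
  induction u as [|a u IH]; simpl. symmetry; apply im_mul1.
  rewrite IH. apply im_assoc.
Qed.

Lemma eval_letter_inv (M : InvMonoid) (f : X -> M) a :
  eval_letter f (letter_inv a) = im_inv (eval_letter f a).
Proof. destruct a; simpl; auto. symmetry; apply inv_inv. Qed.

Lemma eval_winv (M : InvMonoid) (f : X -> M) w :
  eval_word f (rev (map (@letter_inv X) w)) = im_inv (eval_word f w).
Proof.
  induction w as [|a w IH]; simpl. symmetry; apply inv_one.
  rewrite eval_app, IH, inv_mul. simpl. rewrite im_mulr1, eval_letter_inv. reflexivity.
Qed.

Lemma push_le (M : InvMonoid) (f : X -> M) a u :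
  nat_le (eval_letter f a ⋅ eval_word f u) (eval_word f (push a u)).
Proof.
  destruct u as [|b u]; simpl. apply le_refl.
  destruct (excluded_middle_informative _) as [E|E].
  - subst b. simpl. rewrite eval_letter_inv, im_assoc. apply le_idem, idem_aai.
  - simpl. apply le_refl.
Qed.

Lemma eval_le (M : InvMonoid) (f : X -> M) w :
  nat_le (eval_word f w) (eval_word f (act w [])).
Proof.
  induction w as [|a w IH]; simpl. apply le_refl.
  eapply le_trans; [apply le_mull, IH | apply push_le].
Qed.

Section Free.
Variable F : InvMonoid.
Variable iF : X -> F.

Definition Sc := { a : F | exists w, eval_word iF w = a }.
Definition s_mul (a b : Sc) : Sc.
Proof.
  exists (proj1_sig a ⋅ proj1_sig b).
  destruct (proj2_sig a) as [w Hw], (proj2_sig b) as [v Hv].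
  exists (w ++ v). rewrite eval_app, Hw, Hv. reflexivity.
Defined.
Definition s_one : Sc := exist _ im_one (ex_intro _ [] eq_refl).
Definition s_inv (a : Sc) : Sc.
Proof.
  exists (im_inv (proj1_sig a)).
  destruct (proj2_sig a) as [w Hw]. exists (rev (map (@letter_inv X) w)).
  rewrite eval_winv, Hw. reflexivity.
Defined.

Definition SM : InvMonoid.
Proof.
  refine (@Build_InvMonoid Sc s_mul s_one s_inv _ _ _ _ _ _);
    intros; try (apply sig_ext; simpl).
  - apply im_assoc.
  - apply im_mul1.
  - apply im_mulr1.
  - apply im_inv_r.
  - apply im_inv_l.
  - apply im_idem_comm.
    + exact (f_equal (@proj1_sig _ _) H).
    + exact (f_equal (@proj1_sig _ _) H0).
Defined.

Lemma gen_ok x : exists w, eval_word iF w = iF x.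
Proof. exists [inl x]. simpl. apply im_mulr1. Qed.

Lemma id_morph (M : InvMonoid) : inv_monoid_morphism (fun a : M => a).
Proof. repeat split. Qed.

Lemma comp_morph (M N K : InvMonoid) (g : M -> N) (h : N -> K) :
  inv_monoid_morphism g -> inv_monoid_morphism h -> inv_monoid_morphism (fun a => h (g a)).
Proof.
  intros [g1 [g2 g3]] [h1 [h2 h3]]. repeat split; intros.
  - rewrite g1; auto. - rewrite g2; auto. - rewrite g3; auto.
Qed.

Lemma surj (HF : is_free_inverse_monoid iF) (a : F) : exists w, eval_word iF w = a.
Proof.
  destruct HF as [Hu He].
  destruct (Hu SM (fun x => exist _ (iF x) (gen_ok x))) as [g [Hg Hgx]].
  assert (Hp : inv_monoid_morphism (fun b : SM => proj1_sig b)) by (repeat split).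
  assert (E : proj1_sig (g a) = a).
  { apply (He F (fun b => proj1_sig (g b)) (fun b => b)).
    - exact (comp_morph _ _ _ _ _ Hg Hp).
    - apply id_morph.
    - intros x. rewrite Hgx. reflexivity. }
  rewrite <- E. exact (proj2_sig (g a)).
Qed.

Variable HF : is_free_inverse_monoid iF.

Definition wit (a : F) : word X := proj1_sig (constructive_indefinite_description _ (surj HF a)).
Lemma wit_spec a : eval_word iF (wit a) = a.
Proof. unfold wit. destruct (constructive_indefinite_description _ _). assumption. Qed.

Lemma theta : exists th : F -> FG X, inv_monoid_morphism th /\
   forall w, proj1_sig (th (eval_word iF w)) = act w [].
Proof.
  destruct (proj1 HF (FG X) (@fg_gen X)) as [th [Hm Hx]].
  exists th. split; auto. intros w. rewrite eval_morph by auto.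
  rewrite (eval_ext _ _ (@fg_gen X)) by auto. apply eval_fg.
Qed.

Lemma theta_eq v w : eval_word iF v = eval_word iF w -> act v [] = act w [].
Proof.
  intros E. destruct theta as [th [Hm Hw]]. rewrite <- !Hw, E. reflexivity.
Qed.

Lemma theta_sigma a b : sigma_rel a b -> act (wit a) [] = act (wit b) [].
Proof.
  intros [e [He E]]. destruct theta as [th [Hm Hw]].
  pose proof Hm as [H1 [H2 H3]].
  assert (Te : th e = @im_one (FG X)).
  { apply fg_idem. change (im_mul (th e) (th e) = th e). rewrite <- H1. unfold idempotent in He. rewrite He. reflexivity. }
  apply (f_equal th) in E. rewrite !H1, Te, !im_mul1 in E.
  rewrite <- !Hw, !wit_spec, E. reflexivity.
Qed.

Definition mF (a : F) : F := eval_word iF (act (wit a) []).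

Lemma mF_max a : sigma_max a (mF a).
Proof.
  split.
  - apply le_sigma. rewrite <- (wit_spec a) at 1. apply eval_le.
  - intros b Hb. unfold mF. rewrite <- (theta_sigma _ _ Hb).
    rewrite <- (wit_spec b) at 1. apply eval_le.
Qed.

Lemma mF_char w r : is_red w r -> mF (eval_word iF w) = eval_word iF r.
Proof.
  intros [Hp Hr]. unfold mF.
  rewrite (theta_eq (wit (eval_word iF w)) w) by apply wit_spec.
  rewrite (crt_act _ _ _ Hp), act_nil_ok by (apply fr_ok; auto). reflexivity.
Qed.

Definition F' : FInvMonoid := @Build_FInvMonoid F mF mF_max.

Lemma F'_sat : satisfies (@fim_relations X) (M := F') iF.
Proof.
  intros t s [w [r [Hr [-> ->]]]]. unfold eval_fterm, word_fterm, m_fterm. simpl.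
  rewrite !im_mulr1, im_mul1. symmetry. apply mF_char; auto.
Qed.

End Free.
End Eval.

Theorem mainTheorem12 (X : Type) (F : InvMonoid) (iF : X -> F)
  (P : FInvMonoid) (iP : X -> P) :
  is_free_inverse_monoid iF ->
  is_FInv_presentation (@fim_relations X) iP ->
  exists phi : P -> F,
    inv_monoid_morphism phi /\
    (forall a b, phi a = phi b -> a = b) /\
    (forall y : F, exists a : P, phi a = y) /\
    (forall x, phi (iP x) = iF x) /\
    (forall a : P, sigma_max (phi a) (phi (fim_m a))).
Proof.
  intros HF [HPs [HPu HPe]].
  destruct (HPu (F' _ _ _ HF) iF (F'_sat _ _ _ HF)) as [phi [[Hphi Hphim] Hphix]].
  destruct (proj1 HF (fim_base P) iP) as [psi [Hpsi Hpsix]].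
  assert (Hpsim : forall a, psi (mF _ _ _ HF a) = fim_m (psi a)).
  { intros a. unfold mF. rewrite eval_morph by auto.
    rewrite (eval_ext _ _ _ iP) by auto.
    rewrite <- (wit_spec _ _ _ HF a) at 2. rewrite eval_morph by auto.
    rewrite (eval_ext _ _ _ iP (wit _ _ _ HF a)) by auto.
    pose proof (HPs _ _ (ex_intro _ (wit _ _ _ HF a) (ex_intro _ (act (wit _ _ _ HF a) [])
       (conj (is_red_act _ _) (conj eq_refl eq_refl))))) as E.
    unfold eval_fterm, word_fterm, m_fterm in E. simpl in E.
    rewrite !im_mulr1, im_mul1 in E. exact E. }
  assert (E1 : forall y : F, phi (psi y) = y).
  { apply (proj2 HF F (fun y => phi (psi y)) (fun y => y)).
    - exact (comp_morph _ _ _ _ _ Hpsi Hphi).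
    - apply id_morph.
    - intros x. rewrite Hpsix. apply Hphix. }
  assert (E2 : forall a : P, psi (phi a) = a).
  { apply (HPe P (fun a => psi (phi a)) (fun a => a)).
    - split. exact (comp_morph _ _ _ _ _ Hphi Hpsi).
      intros a. rewrite Hphim. apply Hpsim.
    - split. apply id_morph. reflexivity.
    - intros x. rewrite Hphix. apply Hpsix. }
  exists phi. split; [exact Hphi|]. split.
  { intros a b E. rewrite <- (E2 a), <- (E2 b), E. reflexivity. }
  split. { intros y. exists (psi y). apply E1. }
  split. { exact Hphix. }
  intros a. rewrite Hphim. apply mF_max.
Qed.
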